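(* Let $k\geq2$ and let $L=(l_1,\dots,l_k)$ be generic and reduced positive integers with sum $n$. Let $\xi$ be a closed edge-path in $Tonn^{n,k}(L)$ making $p_i\geq0$ steps of type $i$ (in the order $E_1^{p_1}E_2^{p_2}\cdots E_k^{p_k}$), which represents a non-trivial class in $H_1(Tonn^{n,k}(L);\mathbb{Z})$. Then $p_i\geq3$ for some $i\in[k]$. Moreover, $\omega(\xi)=\sum_{i}p_ia_i$ cannot be written as $a_I-a_J$ for any subsets $I,J\subseteq[k]$.
   Context: $L$ is generic if for all $I,J\subseteq[k]$, $\sum_{i\in I}l_i=\sum_{j\in J}l_j$ implies $I=J$; reduced if $\gcd(l_1,\dots,l_k)=1$. The generalized tonnetz $Tonn^{n,k}(L)$ is the simplicial complex on vertex set $\mathbb{Z}_n$ whose maximal simplices are $\Delta(x;\sigma)=\{x,\,x+l_{\sigma(1)},\dots,x+l_{\sigma(1)}+\dots+l_{\sigma(k-1)}\}$ for $x\in\mathbb{Z}_n$, $\sigma\in S_k$. A step of type $i$ is an oriented 1-simplex from $y$ to $y+l_i$. $a_i=ke_i-(1,\dots,1)\in\mathbb{Z}^k$ (the value of the canonical vector cocycle $\omega$ on a step of type $i$), and for $I\subseteq[k]$, $a_I=\sum_{i\in I}a_i$ (with $a_\emptyset=0$). *)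

(* Defs.v *)
From HB Require Import structures.
From mathcomp Require Import all_boot all_order all_algebra all_fingroup.
Set Implicit Arguments. Unset Strict Implicit. Unset Printing Implicit Defensive.
Import Order.TTheory GRing.Theory Num.Theory.

Local Open Scope ring_scope.

(* L = (l_1,...,l_k) is indexed by 'I_k (0-based). *)
Definition generic (k : nat) (l : 'I_k -> nat) : Prop :=
  forall I J : {set 'I_k},
    (\sum_(i in I) l i)%N = (\sum_(j in J) l j)%N -> I = J.

Definition reduced (k : nat) (l : 'I_k -> nat) : Prop :=
  \big[gcdn/0%N]_(i < k) l i = 1%N.

Definition shift (n k : nat) (l : 'I_k -> nat) (y : 'Z_n) (i : 'I_k) : 'Z_n :=
  y + (l i)%:R.

Definition Delta (n k : nat) (l : 'I_k -> nat) (x : 'Z_n) (s : 'S_k) : {set 'Z_n} :=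
  [set x + (\sum_(j : 'I_k | (j < m)%N) l (s j))%N%:R | m : 'I_k].

Definition is_2simplex (n k : nat) (l : 'I_k -> nat) (a b c : 'Z_n) : bool :=
  [&& a != b, b != c, a != c &
      [exists x : 'Z_n, exists s : 'S_k, [set a; b; c] \subset Delta l x s]].

(* Integral simplicial 1-chains are encoded as antisymmetric functions on
   ordered pairs of vertices: the oriented edge [a,b] is the function
   (u,v) |-> [(u,v)=(a,b)] - [(u,v)=(b,a)]. *)
Definition edge_chain (n : nat) (a b : 'Z_n) : 'Z_n -> 'Z_n -> int :=
  fun u v => ((u == a) && (v == b))%:Z - ((u == b) && (v == a))%:Z.

Definition bd2 (n : nat) (a b c : 'Z_n) : 'Z_n -> 'Z_n -> int :=
  fun u v => edge_chain b c u v - edge_chain a c u v + edge_chain a b u v.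

Fixpoint path_chain (n k : nat) (l : 'I_k -> nat) (y : 'Z_n) (s : seq 'I_k)
  : 'Z_n -> 'Z_n -> int :=
  match s with
  | [::] => fun _ _ => 0
  | i :: s' => fun u v => edge_chain y (shift l y i) u v + path_chain l (shift l y i) s' u v
  end.

Definition steps (k : nat) (p : 'I_k -> nat) : seq 'I_k :=
  flatten [seq nseq (p i) i | i <- enum 'I_k].

Definition is_boundary (n k : nat) (l : 'I_k -> nat) (c : 'Z_n -> 'Z_n -> int) : Prop :=
  exists coef : 'Z_n -> 'Z_n -> 'Z_n -> int,
    (forall a b d, coef a b d != 0 -> is_2simplex l a b d) /\
    (forall u v, c u v = \sum_(a : 'Z_n) \sum_(b : 'Z_n) \sum_(d : 'Z_n) coef a b d * bd2 a b d u v).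

Definition avec (k : nat) (i : 'I_k) : 'I_k -> int :=
  fun j => (k%:Z) * (i == j)%:Z - 1.

Definition aset (k : nat) (I : {set 'I_k}) : 'I_k -> int :=
  fun j => \sum_(i in I) avec i j.

Definition omega_path (k : nat) (p : 'I_k -> nat) : 'I_k -> int :=
  fun j => \sum_(i < k) (p i)%:Z * avec i j.

(* Main.v *)
Require Import Defs.
From HB Require Import structures.
From mathcomp Require Import all_boot all_order all_algebra all_fingroup.
From mathcomp Require Import ring lra zify.
Import Order.TTheory GRing.Theory Num.Theory.
Local Open Scope ring_scope.
Set Implicit Arguments. Unset Strict Implicit. Unset Printing Implicit Defensive.

Section S.
Variables (k n : nat) (l : 'I_k -> nat).
Local Notation bnd := (@is_boundary n k l).

Lemma bnd_ext (c c' : 'Z_n -> 'Z_n -> int) :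
  (forall u v, c u v = c' u v) -> bnd c -> bnd c'.
Proof. move=> E [co [H1 H2]]; exists co; split=> // u v; by rewrite -E. Qed.

Lemma bnd0 : bnd (fun _ _ => 0).
Proof.
exists (fun _ _ _ => 0); split=> [a b d|u v]; first by rewrite eqxx.
by rewrite big1 // => a _; rewrite big1 // => b _; rewrite big1 // => d _; rewrite mul0r.
Qed.

Lemma bndD c1 c2 : bnd c1 -> bnd c2 -> bnd (fun u v => c1 u v + c2 u v).
Proof.
move=> [co1 [H1 E1]] [co2 [H2 E2]].
exists (fun a b d => co1 a b d + co2 a b d); split=> [a b d|u v].
  by case: (eqVneq (co1 a b d) 0) => [e|/H1 //]; rewrite e add0r => /H2.
rewrite E1 E2 -big_split; apply: eq_bigr => a _; rewrite -big_split.
apply: eq_bigr => b _; rewrite -big_split; apply: eq_bigr => d _; by rewrite mulrDl.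
Qed.

Lemma bndN c : bnd c -> bnd (fun u v => - c u v).
Proof.
move=> [co [H E]]; exists (fun a b d => - co a b d); split=> [a b d|u v].
  by rewrite oppr_eq0 => /H.
rewrite E -sumrN; apply: eq_bigr => a _; rewrite -sumrN.
apply: eq_bigr => b _; rewrite -sumrN; apply: eq_bigr => d _; by rewrite mulNr.
Qed.

Definition equiv (c1 c2 : 'Z_n -> 'Z_n -> int) := bnd (fun u v => c1 u v - c2 u v).

Lemma equiv_refl c : equiv c c.
Proof. by apply: bnd_ext bnd0 => u v; rewrite subrr. Qed.

Lemma equiv_sym c1 c2 : equiv c1 c2 -> equiv c2 c1.
Proof. by move/bndN; apply: bnd_ext => u v; rewrite opprB. Qed.

Lemma equiv_trans c1 c2 c3 : equiv c1 c2 -> equiv c2 c3 -> equiv c1 c3.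
Proof. by move=> h1 h2; apply: bnd_ext (bndD h1 h2) => u v; ring. Qed.

Lemma equivD c1 c2 d1 d2 : equiv c1 c2 -> equiv d1 d2 ->
  equiv (fun u v => c1 u v + d1 u v) (fun u v => c2 u v + d2 u v).
Proof. by move=> h1 h2; apply: bnd_ext (bndD h1 h2) => u v; ring. Qed.

Lemma equiv_ext c1 c2 d1 d2 : (forall u v, c1 u v = d1 u v) -> (forall u v, c2 u v = d2 u v) ->
  equiv c1 c2 -> equiv d1 d2.
Proof. by move=> e1 e2; apply: bnd_ext => u v; rewrite e1 e2. Qed.

Lemma edge_aa (a : 'Z_n) u v : edge_chain a a u v = 0.
Proof. by rewrite /edge_chain subrr. Qed.

Lemma edge_sym (a b : 'Z_n) u v : edge_chain a b u v = - edge_chain b a u v.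
Proof. by rewrite /edge_chain opprB. Qed.

Lemma triangle (a b c : 'Z_n) : 
  (exists x s, [set a; b; c] \subset Delta l x s) ->
  equiv (fun u v => edge_chain a b u v + edge_chain b c u v) (edge_chain a c).
Proof.
move=> [x [s hs]].
case: (eqVneq a b) => [<-|nab].
  by apply: bnd_ext bnd0 => u v; rewrite edge_aa add0r subrr.
case: (eqVneq b c) => [<-|nbc].
  by apply: bnd_ext bnd0 => u v; rewrite edge_aa addr0 subrr.
case: (eqVneq a c) => [<-|nac].
  by apply: bnd_ext bnd0 => u v; rewrite edge_aa (edge_sym b a) subrr subr0.
exists (fun a' b' d' => ((a' == a) && (b' == b) && (d' == c))%:Z); split=> [a' b' d'|u v].
  case/boolP: ((a' == a) && (b' == b) && (d' == c)); last by [].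
  move=> /andP[/andP[/eqP-> /eqP->] /eqP->] _.
  rewrite /is_2simplex nab nbc nac /=; apply/existsP; exists x; apply/existsP; by exists s.
rewrite (bigD1 a) //= [X in _ = _ + X]big1 ?addr0; last first.
  by move=> a' /negbTE ->; rewrite big1 // => b' _; rewrite big1 // => d' _; rewrite mul0r.
rewrite (bigD1 b) //= [X in _ = _ + X]big1 ?addr0; last first.
  by move=> b' /negbTE ->; rewrite big1 // => d' _; rewrite andbF mul0r.
rewrite (bigD1 c) //= [X in _ = _ + X]big1 ?addr0; last by move=> d' /negbTE ->; rewrite andbF mul0r.
rewrite !eqxx /= mul1r /bd2; ring.
Qed.

Lemma foldl_shift y s : foldl (@shift n k l) y s = y + (\sum_(i <- s) l i)%N%:R.
Proof.
elim: s y => [|i s IH] y /=; first by rewrite big_nil addr0.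
by rewrite IH big_cons /shift natrD addrA.
Qed.

Lemma path_cat y s1 s2 u v : path_chain l y (s1 ++ s2) u v =
  path_chain l y s1 u v + path_chain l (foldl (@shift n k l) y s1) s2 u v.
Proof.
elim: s1 y => [|i s IH] y /=; first by rewrite add0r.
by rewrite IH addrA.
Qed.

Lemma fan x (sg : 'S_k) s z :
  (forall r, (r <= size s)%N -> foldl (@shift n k l) z (take r s) \in Delta l x sg) ->
  equiv (path_chain l z s) (edge_chain z (foldl (@shift n k l) z s)).
Proof.
elim: s z => [|i s IH] z H /=.
  by apply: bnd_ext bnd0 => u v; rewrite edge_aa subrr.
have H1 : equiv (path_chain l (shift l z i) s)
     (edge_chain (shift l z i) (foldl (@shift n k l) (shift l z i) s)).
  apply: IH => r hr; exact: (H r.+1 hr).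
apply: equiv_trans (equivD (equiv_refl (edge_chain z (shift l z i))) H1) _.
apply: triangle; exists x, sg; apply/subsetP => w; rewrite !inE => /orP[/orP[]|]/eqP->.
- exact: (H 0%N).
- by have := H 1%N isT; rewrite /= take0.
- by have := H (size s).+1 (leqnn _); rewrite /= take_size.
Qed.

Lemma equiv_cons y i s t : equiv (path_chain l (shift l y i) s) (path_chain l (shift l y i) t) ->
  equiv (path_chain l y (i :: s)) (path_chain l y (i :: t)).
Proof. move=> h; exact: (equivD (equiv_refl _) h). Qed.


Lemma Delta_prefix (hn : n = (\sum_i l i)%N) (hn1 : (1 < n)%N) (k0 : (0 < k)%N)
  (y : 'Z_n) (sg : 'S_k) m : (m <= k)%N ->
  y + (\sum_(t : 'I_k | (t < m)%N) l (sg t))%N%:R \in Delta l y sg.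
Proof.
move=> hm; case: (ltnP m k) => hmk.
  by apply/imsetP; exists (Ordinal hmk).
have -> : m = k by apply/eqP; rewrite eqn_leq hm.
have -> : (\sum_(t : 'I_k | (t < k)%N) l (sg t))%N = n.
  rewrite hn [RHS](reindex_inj (@perm_inj _ sg)); apply: eq_bigl => t; exact: ltn_ord.
rewrite pchar_Zp // addr0; apply/imsetP; exists (Ordinal k0) => /=.
  by [].
by rewrite big1 ?addr0 // => t; rewrite ltn0.
Qed.

Lemma comm (hn : n = (\sum_i l i)%N) (hn1 : (1 < n)%N) (hk : (1 < k)%N) (y : 'Z_n) i j s :
  equiv (path_chain l y (i::j::s)) (path_chain l y (j::i::s)).
Proof.
have k0 : (0 < k)%N by apply: ltnW.
case: (eqVneq i j) => [->|nij]; first exact: equiv_refl.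
suff key : forall a b, a != b ->
    equiv (path_chain l y [:: a; b]) (edge_chain y (y + (l a + l b)%N%:R)).
  have e1 : forall u v, path_chain l y [::i;j] u v + path_chain l (y + (l i + l j)%N%:R) s u v
      = path_chain l y (i::j::s) u v.
    move=> u v; rewrite -[i::j::s]/([::i;j] ++ s) path_cat foldl_shift !big_cons big_nil addn0 //.
  have e2 : forall u v, path_chain l y [::j;i] u v + path_chain l (y + (l i + l j)%N%:R) s u v
      = path_chain l y (j::i::s) u v.
    move=> u v; rewrite -[j::i::s]/([::j;i] ++ s) path_cat foldl_shift !big_cons big_nil addn0 addnC //.
  apply: equiv_ext e1 e2 _; apply: equivD; last exact: equiv_refl.
  apply: equiv_trans (key i j nij) _; rewrite addnC; apply: equiv_sym; apply: key.
  by rewrite eq_sym.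
move=> a b nab.
pose i0 : 'I_k := Ordinal k0.
pose i1 : 'I_k := Ordinal hk.
pose s1 : 'S_k := tperm i0 a.
pose s0 : 'S_k := tperm i1 (s1 b).
pose sg : 'S_k := (s0 * s1)%g.
have e0 : s0 i0 = i0.
  rewrite /s0 tpermD // /s1; case: tpermP => [eb|ea|nb0 _].
  - by rewrite -eb.
  - by move: nab; rewrite ea eqxx.
  - exact/eqP.
have sg0 : sg i0 = a by rewrite permM e0 /s1 tpermL.
have sg1 : sg i1 = b by rewrite permM /s0 tpermL /s1 tpermK.
have := @fan y sg [:: a; b] y; rewrite foldl_shift !big_cons big_nil addn0; apply.
case=> [|[|[|r]]] // _; rewrite foldl_shift /=.
- have := @Delta_prefix hn hn1 k0 y sg 0 (leq0n _).
  by rewrite big_nil big1 // => t; rewrite ltn0.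
- rewrite big_cons big_nil addn0 -sg0.
  have := @Delta_prefix hn hn1 k0 y sg 1 (ltnW hk).
  by rewrite (big_pred1 i0) // => t /=; case: t => [[|t] ht].
- rewrite !big_cons big_nil addn0 -sg0 -sg1.
  have := @Delta_prefix hn hn1 k0 y sg 2 hk.
  rewrite (bigD1 i0) //= (big_pred1 i1) // => t /=; case: t => [[|[|t]] ht] //.
Qed.


Lemma move_elt (hn : n = (\sum_i l i)%N) (hn1 : (1 < n)%N) (hk : (1 < k)%N) i t1 t2 (y : 'Z_n) :
  equiv (path_chain l y (i :: t1 ++ t2)) (path_chain l y (t1 ++ i :: t2)).
Proof.
elim: t1 y => [|j t1 IH] y /=; first exact: equiv_refl.
apply: equiv_trans (comm hn hn1 hk y i j (t1 ++ t2)) _.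
exact: equiv_cons.
Qed.

Lemma perm_path (hn : n = (\sum_i l i)%N) (hn1 : (1 < n)%N) (hk : (1 < k)%N) s t (y : 'Z_n) :
  perm_eq s t -> equiv (path_chain l y s) (path_chain l y t).
Proof.
elim: s t y => [|i s IH] t y.
  by rewrite perm_sym => /perm_nilP ->; exact: equiv_refl.
move=> hp.
have ti : i \in t by rewrite -(perm_mem hp) mem_head.
move: hp; case/splitPr: ti => t1 t2 hp.
have hp' : perm_eq s (t1 ++ t2).
  by rewrite -(perm_cons i); apply: (perm_trans hp); rewrite perm_catC /= perm_cons perm_catC.
apply: equiv_trans (move_elt hn hn1 hk i t1 t2 y).
apply: equiv_cons; exact: IH.
Qed.


Lemma sum_take_enum r (hr : (r <= k)%N) (F : 'I_k -> nat) :
  (\sum_(i <- take r (enum 'I_k)) F i = \sum_(t : 'I_k | (t < r)%N) F t)%N.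
Proof.
rewrite -[RHS]big_filter [index_enum _]unlock -enumT; congr bigop.
apply: (inj_map val_inj); rewrite map_take val_enum_ord take_iota.
rewrite -(filter_map val (fun x => (x < r)%N)) val_enum_ord.
by rewrite (minn_idPl hr) -(filter_iota_ltn 0 hr).
Qed.

Lemma loop_bnd (hn : n = (\sum_i l i)%N) (hn1 : (1 < n)%N) (k0 : (0 < k)%N) (y : 'Z_n) :
  is_boundary l (path_chain l y (enum 'I_k)).
Proof.
have h := @fan y 1%g (enum 'I_k) y.
have e : foldl (@shift n k l) y (enum 'I_k) = y.
  by rewrite foldl_shift big_enum /= -hn pchar_Zp // addr0.
rewrite e in h; apply: bnd_ext (h _) => [u v|r]; first by rewrite edge_aa subr0.
rewrite size_enum_ord => hr; rewrite foldl_shift sum_take_enum //.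
have := @Delta_prefix hn hn1 k0 y 1%g r hr.
by rewrite (eq_bigr (fun t => l t)) // => t _; rewrite perm1.
Qed.

Lemma flat_bnd (hn : n = (\sum_i l i)%N) (hn1 : (1 < n)%N) (k0 : (0 < k)%N) m (y : 'Z_n) :
  is_boundary l (path_chain l y (flatten (nseq m (enum 'I_k)))).
Proof.
elim: m => [|m IH] /=; first exact: bnd0.
have e : foldl (@shift n k l) y (enum 'I_k) = y.
  by rewrite foldl_shift big_enum /= -hn pchar_Zp // addr0.
apply: bnd_ext (bndD (loop_bnd hn hn1 k0 y) IH) => u v.
by rewrite path_cat e.
Qed.

Lemma sumn_map_count (T : Type) (a : pred T) (s : seq T) m :
  sumn [seq a i * m | i <- s]%N = (count a s * m)%N.
Proof. by elim: s => //= i s ->; rewrite mulnDl. Qed.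

Lemma steps_perm (p : 'I_k -> nat) m : (forall i, p i = m) ->
  perm_eq (steps p) (flatten (nseq m (enum 'I_k))).
Proof.
move=> hp; apply/seq.permP => a.
rewrite /steps !count_flatten -map_comp map_nseq sumn_nseq.
rewrite (eq_map (_ : _ =1 fun i => a i * m)%N); last first.
  by move=> i /=; rewrite count_nseq hp.
by rewrite sumn_map_count mulnC.
Qed.


Lemma steps_sum (p : 'I_k -> nat) :
  (\sum_(i <- steps p) l i = \sum_i p i * l i)%N.
Proof.
rewrite /steps big_flatten big_map big_enum /=; apply: eq_bigr => i _.
by rewrite big_nseq iter_addn_0 mulnC.
Qed.

Lemma core (hk : (1 < k)%N) (hpos : forall i, (0 < l i)%N) (hgen : generic l)
  (hn : n = (\sum_i l i)%N) (p : 'I_k -> nat) (x : 'Z_n)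
  (hclosed : foldl (@shift n k l) x (steps p) = x) (c : int) (I J : {set 'I_k})
  (hp : forall j, (p j)%:R + (j \in J)%:R = c + (j \in I)%:R :> int) :
  is_boundary l (path_chain l x (steps p)).
Proof.
have k0 : (0 < k)%N by apply: ltnW.
have hkn : (k <= n)%N.
  rewrite hn -[X in (X <= _)%N]card_ord -sum1_card; exact: leq_sum.
have hn1 : (1 < n)%N by apply: leq_trans hkn.
suff [m hm] : exists m, forall i, p i = m.
  apply: bnd_ext (bndD (perm_path hn hn1 hk x (steps_perm hm)) (flat_bnd hn hn1 k0 m x)).
  by move=> u v; rewrite subrK.
pose N := (\sum_i p i * l i)%N.
have hN : (N %% n = 0)%N.
  move: hclosed; rewrite foldl_shift steps_sum -{2}[x]addr0 => /addrI /(congr1 (@nat_of_ord _)).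
  by rewrite val_Zp_nat.
pose SI := (\sum_(i in I) l i)%N.
pose SJ := (\sum_(i in J) l i)%N.
have SIn : (SI <= n)%N by rewrite hn [X in (_ <= X)%N](bigID (mem I)) leq_addr.
have SJn : (SJ <= n)%N by rewrite hn [X in (_ <= X)%N](bigID (mem J)) leq_addr.
have key : (N%:R + SJ%:R = c * n%:R + SI%:R :> int).
  have ind : forall (A : {set 'I_k}), (\sum_(i in A) l i)%N%:R = 
      \sum_i (i \in A)%:R * (l i)%:R :> int.
    move=> A; rewrite big_mkcond natr_sum; apply: eq_bigr => i _.
    by case: (i \in A); rewrite ?mul1r ?mul0r.
  rewrite /SI /SJ !ind /N hn !natr_sum mulr_sumr -!big_split /=.
  apply: eq_bigr => i _; rewrite natrM -mulrDl hp; ring.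
have hq := divn_eq N n; rewrite hN addn0 in hq.
set q := (N %/ n)%N in hq.
have hsum0 : forall A : {set 'I_k}, A = set0 -> (\sum_(i in A) l i = 0)%N.
  by move=> A ->; rewrite big_set0.
have sumT : (\sum_(i in [set: 'I_k]) l i = n)%N.
  by rewrite hn; apply: eq_bigl => i; rewrite in_setT.
have eSI : forall A : {set 'I_k}, (\sum_(i in A) l i = 0)%N -> A = set0.
  by move=> A hA; apply: (hgen A set0); rewrite hA big_set0.
have eST : forall A : {set 'I_k}, (\sum_(i in A) l i = n)%N -> A = setT.
  by move=> A hA; apply: (hgen A setT); rewrite hA sumT.
rewrite hq natrM in key.
have hn2 : (2 <= n)%N by [].
have [d0|[d1|dm1]] : (q%:Z - c = 0 \/ q%:Z - c = 1 \/ q%:Z - c = -1).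
  move: key SIn SJn hn2; rewrite !natz; nia.
- have e : SI = SJ by move: key; rewrite !natz; lia.
  have IJ : I = J by apply: (hgen I J).
  exists (p (Ordinal k0)) => i; have h1 := hp i; have h2 := hp (Ordinal k0).
  move: h1 h2; rewrite IJ !natz; case: (i \in J); case: (Ordinal k0 \in J); lia.
- have eJ : SJ = 0%N by move: key SIn; rewrite !natz; lia.
  have eI : SI = n by move: key SIn; rewrite !natz; lia.
  rewrite (eSI J eJ) (eST I eI) in hp.
  exists (p (Ordinal k0)) => i; have h1 := hp i; have h2 := hp (Ordinal k0).
  move: h1 h2; rewrite !inE !natz; lia.
- have eI : SI = 0%N by move: key SJn; rewrite !natz; lia.
  have eJ : SJ = n by move: key SJn; rewrite !natz; lia.
  rewrite (eSI I eI) (eST J eJ) in hp.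
  exists (p (Ordinal k0)) => i; have h1 := hp i; have h2 := hp (Ordinal k0).
  move: h1 h2; rewrite !inE !natz; lia.
Qed.


Lemma sum_delta (P : pred 'I_k) (F : 'I_k -> int) j :
  \sum_(i | P i) F i * (i == j)%:Z = if P j then F j else 0.
Proof.
rewrite big_mkcond (bigD1 j) //= eqxx mulr1 big1 ?addr0 // => i /negbTE ->.
by case: (P i); rewrite ?mulr0.
Qed.

Lemma omega_eq (p : 'I_k -> nat) j :
  omega_path p j = k%:Z * (p j)%:Z - (\sum_i p i)%N%:Z.
Proof.
rewrite /omega_path; unfold avec.
under [in LHS]eq_bigr => i _ do rewrite mulrBr mulr1 mulrA.
rewrite sumrB (sum_delta xpredT (fun i => (p i)%:Z * k%:Z)) /=.
rewrite -(natz (\sum_i p i)%N) natr_sum mulrC; congr (_ - _).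
by apply: eq_bigr => i _; rewrite natz.
Qed.

Lemma aset_eq (A : {set 'I_k}) j :
  aset A j = k%:Z * (j \in A)%:Z - #|A|%:Z.
Proof.
rewrite /aset /avec sumrB sumr_const.
rewrite (eq_bigr (fun i => k%:Z * (i == j)%:Z)) // (sum_delta _ (fun _ => k%:Z)).
by rewrite natz; case: (j \in A); rewrite ?mulr1 ?mulr0.
Qed.


End S.

Theorem proposition5p6 (k : nat) (l : 'I_k -> nat) (n : nat)
  (hk : (2 <= k)%N) (hpos : forall i, (0 < l i)%N)
  (hgen : generic l) (hred : reduced l)
  (hn : n = (\sum_(i < k) l i)%N)
  (p : 'I_k -> nat) (x : 'Z_n)
  (hclosed : foldl (@shift n k l) x (steps p) = x)
  (hnontriv : ~ is_boundary l (path_chain l x (steps p))) :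
  (exists i, (3 <= p i)%N) /\
  (forall I J : {set 'I_k}, ~ (forall j, omega_path p j = aset I j - aset J j)).
Proof.
split.
  case: (boolP [exists i, (3 <= p i)%N]) => [/existsP //|/existsPn hall].
  exfalso; apply: hnontriv.
  apply: (core hk hpos hgen hn hclosed (c := 1) (I := [set i | p i == 2%N])
    (J := [set i | p i == 0%N])) => j.
  have := hall j; rewrite !inE.
  by case: (p j) => [|[|[|m]]].
move=> I J H; apply: hnontriv.
have k0 : (0 < k)%N by apply: ltnW.
pose i0 : 'I_k := Ordinal k0.
pose Q := (\sum_i p i)%N%:Z - #|I|%:Z + #|J|%:Z.
have hq : forall j, k%:Z * ((p j)%:Z + (j \in J)%:Z - (j \in I)%:Z) = Q.
  move=> j; have := H j; rewrite omega_eq !aset_eq /Q => e.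
  by apply/eqP; rewrite -subr_eq0; apply/eqP; move: e; lia.
apply: (core hk hpos hgen hn hclosed
  (c := (p i0)%:Z + (i0 \in J)%:Z - (i0 \in I)%:Z) (I := I) (J := J)) => j.
have knz : k%:Z != 0 by rewrite eqz_nat -lt0n.
have := mulfI knz (etrans (hq j) (esym (hq i0))).
by rewrite !natz => <-; ring.
Qed.
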